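(* Let $\mathcal{H}=(V,\vec H,\bm{w})$ be a finite, loopless, strongly connected, weighted directed hypergraph with $|V|\ge2$, and let $h=(A_h,B_h)\in\vec H$ with $B_h=\{y_1,\dots,y_m\}$. Then for every $\alpha\in[0,1]$, $$\kappa_\alpha(h)\le\frac{1-\alpha}{L(h)}\left(\frac{1}{m}\sum_{j=1}^m C(y_j,\bm{w})+\mathrm{diam}(\mathcal{H})\right),$$ where $C(y_j,\bm w)$ is defined below.
   Context: A weighted directed hypergraph $(V,\vec H,\bm{w})$ has a finite vertex set $V$, a finite set $\vec H$ of hyperedges, each an ordered pair $h=(A_h,B_h)$ of nonempty subsets of $V$, and positive weights $w_h>0$. It is loopless if $A_h\cap B_h=\emptyset$ for all $h$. A directed path from $u$ to $v$ is a sequence of hyperedges $h_1,\dots,h_l$ with $u\in A_{h_1}$, $v\in B_{h_l}$ and $B_{h_j}\cap A_{h_{j+1}}\ne\emptyset$; strongly connected means a directed path exists from $u$ to $v$ for all distinct $u,v$. Quasi-distance: $d(u,v)=\inf_\gamma\sum_{h\in\gamma}w_h$ over directed paths from $u$ to $v$ ($u\neq v$), $d(u,u)=0$; $\mathrm{diam}(\mathcal{H})=\max_{u,v}d(u,v)$. $L(h)=\min_{x\in A_h,y\in B_h}d(x,y)$. $\Gamma^{in}(v)=\{z:\exists h'\text{ with }v\in B_{h'},z\in A_{h'}\}$, $\Gamma^{out}(v)=\{z:\exists h'\text{ with }v\in A_{h'},z\in B_{h'}\}$. For $h$ with $A_h=\{x_1,\dots,x_n\}$, $B_h=\{y_1,\dots,y_m\}$,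 $\alpha\in[0,1]$: $\mu^\alpha_{A_h}=\sum_i\mu^\alpha_{x_i}$ with $\mu^\alpha_{x_i}(x_i)=\alpha/n$, $\mu^\alpha_{x_i}(z)=(1-\alpha)\sum_{h':x_i\in B_{h'},z\in A_{h'}}\frac{1}{n|A_{h'}|}\frac{w_{h'}}{\sum_{h'':x_i\in B_{h''}}w_{h''}}$ for $z\in\Gamma^{in}(x_i)$, $0$ otherwise; $\mu^\alpha_{B_h}=\sum_j\mu^\alpha_{y_j}$ with $\mu^\alpha_{y_j}(y_j)=\alpha/m$, $\mu^\alpha_{y_j}(z)=(1-\alpha)\sum_{h':y_j\in A_{h'},z\in B_{h'}}\frac{1}{m|B_{h'}|}\frac{w_{h'}}{\sum_{h'':y_j\in A_{h''}}w_{h''}}$ for $z\in\Gamma^{out}(y_j)$, $0$ otherwise. $W(\mu,\nu)=\inf_\pi\sum_{u,v}\pi(u,v)d(u,v)$ over couplings $\pi$ with $\sum_v\pi(u,v)=\mu(u)$, $\sum_u\pi(u,v)=\nu(v)$. $\kappa_\alpha(h)=1-W(\mu^\alpha_{A_h},\mu^\alpha_{B_h})/L(h)$. Definition of $C$: let $d(A_h,z)=\min_{x\in A_h}d(x,z)$. For $y\in B_h$ set $\Gamma^-_y=\{z\in\Gamma^{out}(y):d(A_h,z)<d(A_h,y)\}$, $\Gamma^+_y=\{z\in\Gamma^{out}(y):d(A_h,z)>d(A_h,y)\}$; $C_1(y)=d(A_h,y)-\min_{z\in\Gamma^-_y}d(A_h,z)$ (or $0$ if $\Gamma^-_y=\emptyset$),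 $C_2(y)=\min_{z\in\Gamma^+_y}d(A_h,z)-d(A_h,y)$ (or $0$ if $\Gamma^+_y=\emptyset$), and $$C(y,\bm w)=\frac{C_1(y)\sum_{z\in\Gamma^-_y}\sum_{h':y\in A_{h'},z\in B_{h'}}\frac{w_{h'}}{|B_{h'}|}-C_2(y)\sum_{z\in\Gamma^+_y}\sum_{h':y\in A_{h'},z\in B_{h'}}\frac{w_{h'}}{|B_{h'}|}}{\sum_{h':y\in A_{h'}}w_{h'}}.$$ *)

(* Defs.v *)
From HB Require Import structures.
From mathcomp Require Import all_boot all_order all_algebra.
From mathcomp Require Import classical_sets reals.
Set Implicit Arguments. Unset Strict Implicit. Unset Printing Implicit Defensive.
Import Order.TTheory GRing.Theory Num.Theory.
Local Open Scope classical_set_scope.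
Local Open Scope ring_scope.

(* A weighted directed hypergraph: vertex set V (a finType), hyperedges indexed
   by a finType E, each hyperedge e being the ordered pair (A e, B e) of sets of
   vertices, with weight w e. *)
Section Hypergraph.
Variables (R : realType) (V E : finType) (A B : E -> {set V}) (w : E -> R).

(* well-formedness: nonempty tails/heads, positive weights, and hyperedges are
   distinct as ordered pairs (H is a set of pairs) *)
Definition hypergraph_wf : Prop :=
  [/\ forall e, A e != finset.set0, forall e, B e != finset.set0, forall e, 0 < w e
    & injective (fun e => (A e, B e))].

Definition loopless : Prop := forall e, A e :&: B e = finset.set0.

Definition linked (h1 h2 : E) : bool := [exists x, (x \in B h1) && (x \in A h2)].

Definition is_dpath (u v : V) (p : seq E) : bool :=
  if p is h :: t then [&& u \in A h, path linked h t & v \in B (last h t)]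
  else false.

Definition strongly_connected : Prop :=
  forall u v : V, u != v -> exists p, is_dpath u v p.

Definition qdist (u v : V) : R :=
  if u == v then 0
  else inf [set r | exists p, is_dpath u v p /\ r = \sum_(h <- p) w h].

Definition diam : R := \big[Num.max/0]_(u : V) \big[Num.max/0]_(v : V) qdist u v.

Definition Lh (h : E) : R :=
  inf [set r | exists x y, [/\ x \in A h, y \in B h & r = qdist x y]].

Definition Gamma_in (v : V) : {set V} :=
  [set z | [exists h', (v \in B h') && (z \in A h')]].
Definition Gamma_out (v : V) : {set V} :=
  [set z | [exists h', (v \in A h') && (z \in B h')]].

Definition mu_in (alpha : R) (n : nat) (x z : V) : R :=
  if z == x then alpha / n%:R
  else if z \in Gamma_in x then
    (1 - alpha) * \sum_(h' | (x \in B h') && (z \in A h'))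
       (1 / (n%:R * #|A h'|%:R)) * (w h' / \sum_(h'' | x \in B h'') w h'')
  else 0.

Definition mu_out (alpha : R) (m : nat) (y z : V) : R :=
  if z == y then alpha / m%:R
  else if z \in Gamma_out y then
    (1 - alpha) * \sum_(h' | (y \in A h') && (z \in B h'))
       (1 / (m%:R * #|B h'|%:R)) * (w h' / \sum_(h'' | y \in A h'') w h'')
  else 0.

Definition mu_A (alpha : R) (h : E) (z : V) : R :=
  \sum_(x in A h) mu_in alpha #|A h| x z.
Definition mu_B (alpha : R) (h : E) (z : V) : R :=
  \sum_(y in B h) mu_out alpha #|B h| y z.

Definition W1 (mu nu : V -> R) : R :=
  inf [set c | exists pi : V -> V -> R,
        [/\ forall u v, 0 <= pi u v,
            forall u, \sum_(v : V) pi u v = mu u,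
            forall v, \sum_(u : V) pi u v = nu v
          & c = \sum_(u : V) \sum_(v : V) pi u v * qdist u v]].

Definition kappa (alpha : R) (h : E) : R :=
  1 - W1 (mu_A alpha h) (mu_B alpha h) / Lh h.

Definition dA (h : E) (z : V) : R :=
  inf [set r | exists x, x \in A h /\ r = qdist x z].

Definition Gminus (h : E) (y : V) : {set V} :=
  [set z in Gamma_out y | dA h z < dA h y].
Definition Gplus (h : E) (y : V) : {set V} :=
  [set z in Gamma_out y | dA h y < dA h z].

Definition C1 (h : E) (y : V) : R :=
  if Gminus h y == finset.set0 then 0
  else dA h y - inf [set r | exists z, z \in Gminus h y /\ r = dA h z].
Definition C2 (h : E) (y : V) : R :=
  if Gplus h y == finset.set0 then 0
  else inf [set r | exists z, z \in Gplus h y /\ r = dA h z] - dA h y.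

Definition Cw (h : E) (y : V) : R :=
  (C1 h y * \sum_(z in Gminus h y) \sum_(h' | (y \in A h') && (z \in B h'))
              w h' / #|B h'|%:R
   - C2 h y * \sum_(z in Gplus h y) \sum_(h' | (y \in A h') && (z \in B h'))
              w h' / #|B h'|%:R)
  / \sum_(h' | y \in A h') w h'.

End Hypergraph.

(* Main.v *)
Require Import Defs.
From mathcomp Require Import all_boot all_order all_algebra.
From mathcomp Require Import classical_sets reals.
From mathcomp Require Import ring lra.
Import Order.TTheory GRing.Theory Num.Theory.
Local Open Scope ring_scope.

Section S.
Variables (R : realType) (V E : finType) (A B : E -> {set V}) (w : E -> R).
Hypothesis Hwf : hypergraph_wf A B w.
Hypothesis Hloop : loopless A B.
Hypothesis Hsc : strongly_connected A B.

Let d := qdist A B w.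

Lemma lerT {x y z : R} : x <= y -> y <= z -> x <= z.
Proof. exact: le_trans. Qed.

Lemma wpos e : 0 < w e. Proof. by case: Hwf. Qed.

Lemma sum_path_ge0 (p : seq E) : 0 <= \sum_(e <- p) w e.
Proof. by apply: sumr_ge0 => e _; apply/ltW/wpos. Qed.

Lemma inf_le_elt (S : set R) x : (forall y, S y -> 0 <= y) -> S x -> inf S <= x.
Proof. move=> H Sx; apply: (ge_inf _ Sx); exists 0 => y; exact: H. Qed.

Lemma dref u : d u u = 0.
Proof. by rewrite /d /qdist eqxx. Qed.

Lemma dge0 u v : 0 <= d u v.
Proof.
rewrite /d /qdist; case: eqP => // /eqP uv.
have [p Hp] := Hsc _ _ uv.
apply: lb_le_inf; first by exists (\sum_(e <- p) w e); exists p.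
by move=> r [q [_ ->]]; apply: sum_path_ge0.
Qed.

Lemma d_le_path u v p : is_dpath A B u v p -> d u v <= \sum_(e <- p) w e.
Proof.
move=> Hp; rewrite /d /qdist; case: eqP => _; first exact: sum_path_ge0.
apply: inf_le_elt; last by exists p.
by move=> r [q [_ ->]]; apply: sum_path_ge0.
Qed.

Lemma dpath_cat u v x p q : is_dpath A B u v p -> is_dpath A B v x q ->
  is_dpath A B u x (p ++ q).
Proof.
case: p => [|h t] //=; case: q => [|h2 t2] //=.
move=> /and3P[uA pt vB] /and3P[vA pt2 xB].
rewrite uA cat_path pt /= last_cat /= xB pt2 andbT /linked.
by rewrite andbT; apply/existsP; exists v; rewrite vB vA.
Qed.

Lemma dtri u v x : d u x <= d u v + d v x.
Proof.
case: (eqVneq u x) => [->|ux]; first by rewrite dref addr_ge0 // dge0.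
case: (eqVneq u v) => [->|uv]; first by rewrite dref add0r.
case: (eqVneq v x) => [->|vx]; first by rewrite dref addr0.
have key : forall p q, is_dpath A B u v p -> is_dpath A B v x q ->
   d u x <= \sum_(e <- p) w e + \sum_(e <- q) w e.
  by move=> p q Hp Hq; rewrite -big_cat; apply: d_le_path; apply: dpath_cat Hp Hq.
have [q0 Hq0] := Hsc _ _ vx.
have H1 : forall q, is_dpath A B v x q -> d u x - \sum_(e <- q) w e <= d u v.
  move=> q Hq; rewrite {2}/d /qdist (negbTE uv).
  apply: lb_le_inf; first by have [p Hp] := Hsc _ _ uv; exists (\sum_(e <- p) w e); exists p.
  by move=> r [p [Hp ->]]; rewrite lerBlDr; apply: key.
have : d u x - d u v <= d v x.
  rewrite {3}/d /qdist (negbTE vx).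
  apply: lb_le_inf; first by exists (\sum_(e <- q0) w e); exists q0.
  by move=> r [q [Hq ->]]; rewrite lerBlDr addrC -lerBlDr H1.
by rewrite lerBlDl addrC.
Qed.


Lemma ne_set0 (S : {set V}) : S != finset.set0 -> exists x, x \in S.
Proof. by case/set0Pn => x Hx; exists x. Qed.

Lemma le_bmax {I : finType} (F : I -> R) i : F i <= \big[Num.max/0]_(j : I) F j.
Proof. by rewrite (bigD1 i) //= le_max lexx. Qed.

Lemma d_le_diam u v : d u v <= diam A B w.
Proof.
have H1 := le_bmax (fun u => \big[Num.max/0]_(v : V) qdist A B w u v) u.
apply: lerT _ H1.
exact: (le_bmax (fun v => qdist A B w u v) v).
Qed.

Variable h : E.
Let f := dA A B w h.

Lemma Ane e : exists x, x \in A e. Proof. by case: Hwf => HA _ _ _; apply: ne_set0. Qed.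
Lemma Bne e : exists x, x \in B e. Proof. by case: Hwf => _ HB _ _; apply: ne_set0. Qed.

Lemma f_ge0 z : 0 <= f z.
Proof.
have [x0 Hx0] := Ane h.
apply: lb_le_inf; first by exists (d x0 z); exists x0.
by move=> r [x [_ ->]]; apply: dge0.
Qed.

Lemma f_le x z : x \in A h -> f z <= d x z.
Proof. move=> Hx; apply: inf_le_elt; last by exists x. by move=> r [y [_ ->]]; apply: dge0. Qed.

Lemma f_A x : x \in A h -> f x = 0.
Proof. by move=> Hx; apply/eqP; rewrite eq_le f_ge0 andbT -(dref x) f_le. Qed.

Lemma f_lip u v : f v <= f u + d u v.
Proof.
rewrite -lerBlDr.
have [x0 Hx0] := Ane h.
apply: lb_le_inf; first by exists (d x0 u); exists x0.
move=> r [x [Hx ->]]; rewrite lerBlDr; apply: lerT (dtri _ u _).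
exact: f_le.
Qed.

Lemma f_le_diam z : f z <= diam A B w.
Proof. have [x0 Hx0] := Ane h; apply: lerT (f_le x0 z Hx0) _; exact: d_le_diam. Qed.


Definition Sout (y : V) := \sum_(h' | y \in A h') w h'.
Definition cout (y z : V) := \sum_(h' | (y \in A h') && (z \in B h')) w h' / #|B h'|%:R.
Definition Sin (x : V) := \sum_(h' | x \in B h') w h'.
Definition cin (x z : V) := \sum_(h' | (x \in B h') && (z \in A h')) w h' / #|A h'|%:R.

Lemma cout_yy y : cout y y = 0.
Proof.
rewrite /cout big_pred0 // => e; apply/negbTE/negP => /andP[H1 H2].
have := Hloop e; move/setP/(_ y); by rewrite !inE H1 H2.
Qed.

Lemma cin_xx x : cin x x = 0.
Proof.
rewrite /cin big_pred0 // => e; apply/negbTE/negP => /andP[H1 H2].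
have := Hloop e; move/setP/(_ x); by rewrite !inE H1 H2.
Qed.

Lemma mu_out_dec (alpha : R) (m : nat) y z :
  mu_out A B w alpha m y z =
  (if z == y then alpha / m%:R else 0) + (1 - alpha) / (m%:R * Sout y) * cout y z.
Proof.
rewrite /mu_out; case: eqP => [->|/eqP zy].
  by rewrite cout_yy mulr0 addr0.
rewrite add0r; case: ifP => Hz.
  rewrite /cout mulr_sumr mulr_sumr; apply: eq_bigr => e _.
  rewrite /Sout !invfM. ring.
rewrite /cout big_pred0 ?mulr0 // => e; apply/negbTE/negP => /andP[H1 H2].
by move: Hz; rewrite inE; move/negbT/negP; apply; apply/existsP; exists e; rewrite H1 H2.
Qed.

Lemma mu_in_dec (alpha : R) (n : nat) x z :
  mu_in A B w alpha n x z =
  (if z == x then alpha / n%:R else 0) + (1 - alpha) / (n%:R * Sin x) * cin x z.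
Proof.
rewrite /mu_in; case: eqP => [->|/eqP zy].
  by rewrite cin_xx mulr0 addr0.
rewrite add0r; case: ifP => Hz.
  rewrite /cin mulr_sumr mulr_sumr; apply: eq_bigr => e _.
  rewrite /Sin !invfM. ring.
rewrite /cin big_pred0 ?mulr0 // => e; apply/negbTE/negP => /andP[H1 H2].
by move: Hz; rewrite inE; move/negbT/negP; apply; apply/existsP; exists e; rewrite H1 H2.
Qed.


Hypothesis HV : (2 <= #|V|)%N.

Lemma other (y : V) : exists v, v != y.
Proof.
case: (pickP (predC1 y)) => [v /= Hv|H]; first by exists v.
have : (#|V| <= 1)%N.
  rewrite -cardsT -(cards1 y); apply: subset_leq_card; apply/fintype.subsetP => v _.
  by move: (H v) => /= /negbT; rewrite negbK inE.
by rewrite leqNgt HV.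
Qed.

Lemma sum_pos_ex (P : pred E) e : P e -> 0 < \sum_(e' | P e') w e'.
Proof.
move=> Pe; rewrite (bigD1 e) //=; apply: ltr_wpDr; last exact: wpos.
by apply: sumr_ge0 => i _; apply/ltW/wpos.
Qed.

Lemma Sout_pos y : 0 < Sout y.
Proof.
have [v vy] := other y.
have yv : y != v by rewrite eq_sym.
have [[|e t] //= /and3P[Hy _ _]] := Hsc _ _ yv.
exact: (sum_pos_ex _ _ Hy).
Qed.


Lemma Sin_pos x : 0 < Sin x.
Proof.
have [v vx] := other x.
have [[|e t] //= /and3P[_ _ Hx]] := Hsc _ _ vx.
exact: (sum_pos_ex _ _ Hx).
Qed.

Lemma sum_cout y : \sum_(z : V) cout y z = Sout y.
Proof.
rewrite /cout /Sout.
rewrite (exchange_big_dep (fun e => y \in A e)) /=; last by move=> z e _ /andP[].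
apply: eq_bigr => e He.
rewrite (eq_bigl (fun z => z \in B e)); last by move=> z; rewrite He.
rewrite sumr_const -(mulr_natr (w e / _)) divfK //.
have [b Hb] := Bne e; rewrite pnatr_eq0 -lt0n card_gt0; apply/set0Pn; by exists b.
Qed.

Lemma sum_cin x : \sum_(z : V) cin x z = Sin x.
Proof.
rewrite /cin /Sin.
rewrite (exchange_big_dep (fun e => x \in B e)) /=; last by move=> z e _ /andP[].
apply: eq_bigr => e He.
rewrite (eq_bigl (fun z => z \in A e)); last by move=> z; rewrite He.
rewrite sumr_const -(mulr_natr (w e / _)) divfK //.
have [b Hb] := Ane e; rewrite pnatr_eq0 -lt0n card_gt0; apply/set0Pn; by exists b.
Qed.

Lemma cout_ge0 y z : 0 <= cout y z.
Proof. apply: sumr_ge0 => e _; apply: divr_ge0; [exact/ltW/wpos|exact: ler0n]. Qed.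
Lemma cin_ge0 y z : 0 <= cin y z.
Proof. apply: sumr_ge0 => e _; apply: divr_ge0; [exact/ltW/wpos|exact: ler0n]. Qed.


Lemma cout_out y z : z \notin Gamma_out A B y -> cout y z = 0.
Proof.
move=> Hz; rewrite /cout big_pred0 // => e; apply/negbTE/negP => /andP[H1 H2].
by move: Hz; rewrite inE; move/negP; apply; apply/existsP; exists e; rewrite H1 H2.
Qed.

Definition Nw y := C1 A B w h y * \sum_(z in Gminus A B w h y) cout y z
   - C2 A B w h y * \sum_(z in Gplus A B w h y) cout y z.

Lemma Cw_eq y : Cw A B w h y = Nw y / Sout y.
Proof. by []. Qed.

Lemma cout_bound y : Sout y * f y - Nw y <= \sum_(z : V) cout y z * f z.
Proof.
have E1 : \sum_(z : V) cout y z * (f z - f y) = \sum_(z : V) cout y z * f z - Sout y * f y.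
  rewrite -sum_cout mulr_suml -sumrB; apply: eq_bigr => z _; by rewrite mulrBr.
pose g z := (if z \in Gminus A B w h y then - C1 A B w h y * cout y z else 0)
          + (if z \in Gplus A B w h y then C2 A B w h y * cout y z else 0).
have E2 : \sum_(z : V) g z = - Nw y.
  rewrite /g big_split /= -!big_mkcond /= -!mulr_sumr /Nw mulNr opprB addrC; by [].
have E3 : \sum_(z : V) g z <= \sum_(z : V) cout y z * (f z - f y).
  apply: ler_sum => z _; rewrite /g.
  have cz := cout_ge0 y z.
  case: (boolP (z \in Gminus A B w h y)) => Hm.
    have Hp : z \notin Gplus A B w h y.
      move: Hm; rewrite !inE => /andP[_ H1]; apply/negP => /andP[_ H2].
      by move: (lt_trans H1 H2); rewrite ltxx.
    rewrite (negbTE Hp) addr0 mulrC; apply: ler_wpM2l => //.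
    rewrite /C1; case: eqP => [H0|_]; first by move: Hm; rewrite H0 inE.
    rewrite opprB lerD2r; apply: inf_le_elt; last by exists z.
    by move=> r [z' [_ ->]]; apply: f_ge0.
  rewrite add0r.
  case: (boolP (z \in Gplus A B w h y)) => Hp.
    rewrite mulrC; apply: ler_wpM2l => //.
    rewrite /C2; case: eqP => [H0|_]; first by move: Hp; rewrite H0 inE.
    rewrite lerD2r; apply: inf_le_elt; last by exists z.
    by move=> r [z' [_ ->]]; apply: f_ge0.
  case: (boolP (z \in Gamma_out A B y)) => Hg; last by rewrite cout_out // mul0r.
  move: Hg Hm Hp; rewrite !inE => Hg; rewrite Hg /= -!leNgt => H1 H2.
  have -> : f z = f y by apply/eqP; rewrite eq_le H1 H2.
  by rewrite subrr mulr0.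
move: E3; rewrite E2 E1 => H; lra.
Qed.


Lemma f_ge_L y : y \in B h -> Lh A B w h <= f y.
Proof.
move=> Hy; have [x0 Hx0] := Ane h.
apply: lb_le_inf; first by exists (d x0 y); exists x0.
move=> r [x [Hx ->]]; apply: inf_le_elt; first by move=> r' [? [? [? ? ->]]]; apply: dge0.
by exists x, y.
Qed.

Variables (alpha : R) (Ha0 : 0 <= alpha) (Ha1 : alpha <= 1).

Lemma exp_out (m : nat) y : \sum_(z : V) mu_out A B w alpha m y z * f z =
  alpha / m%:R * f y + (1 - alpha) / (m%:R * Sout y) * \sum_(z : V) cout y z * f z.
Proof.
rewrite (eq_bigr (fun z => (if z == y then alpha / m%:R else 0) * f z +
   (1 - alpha) / (m%:R * Sout y) * (cout y z * f z))); last first.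
  by move=> z _; rewrite mu_out_dec mulrDl mulrA.
rewrite big_split /= -mulr_sumr; congr (_ + _).
rewrite (bigD1 y) //= eqxx big1 ?addr0 // => z /negbTE ->; by rewrite mul0r.
Qed.

Lemma lower_out (m : nat) y : (0 < m)%N -> y \in B h ->
  m%:R^-1 * Lh A B w h - (1 - alpha) / m%:R * Cw A B w h y <=
  \sum_(z : V) mu_out A B w alpha m y z * f z.
Proof.
move=> m0 Hy; rewrite exp_out.
have S0 := Sout_pos y.
have m0' : (0 < m%:R :> R) by rewrite ltr0n.
have Hk : 0 <= (1 - alpha) / (m%:R * Sout y).
  by apply: divr_ge0; [rewrite subr_ge0|apply: mulr_ge0; apply: ltW].
have H1 := ler_wpM2l Hk (cout_bound y).
have EE : (1 - alpha) / (m%:R * Sout y) * (Sout y * f y - Nw y) =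
   (1 - alpha) / m%:R * f y - (1 - alpha) / m%:R * (Nw y / Sout y).
  by field; apply/andP; split; rewrite gt_eqF.
rewrite EE in H1; rewrite Cw_eq.
have HL := f_ge_L _ Hy.
have E2 : alpha / m%:R * f y + (1 - alpha) / m%:R * f y = m%:R^-1 * f y.
  by field; rewrite gt_eqF.
have H3 : m%:R^-1 * Lh A B w h <= m%:R^-1 * f y.
  by apply: ler_wpM2l => //; rewrite invr_ge0 ltW.
lra.
Qed.


Lemma exp_in (n : nat) x : \sum_(z : V) mu_in A B w alpha n x z * f z =
  alpha / n%:R * f x + (1 - alpha) / (n%:R * Sin x) * \sum_(z : V) cin x z * f z.
Proof.
rewrite (eq_bigr (fun z => (if z == x then alpha / n%:R else 0) * f z +
   (1 - alpha) / (n%:R * Sin x) * (cin x z * f z))); last first.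
  by move=> z _; rewrite mu_in_dec mulrDl mulrA.
rewrite big_split /= -mulr_sumr; congr (_ + _).
rewrite (bigD1 x) //= eqxx big1 ?addr0 // => z /negbTE ->; by rewrite mul0r.
Qed.

Lemma upper_in (n : nat) x : (0 < n)%N -> x \in A h ->
  \sum_(z : V) mu_in A B w alpha n x z * f z <= (1 - alpha) / n%:R * diam A B w.
Proof.
move=> n0 Hx; rewrite exp_in f_A // mulr0 add0r.
have S0 := Sin_pos x.
have n0' : (0 < n%:R :> R) by rewrite ltr0n.
have Hk : 0 <= (1 - alpha) / (n%:R * Sin x).
  by apply: divr_ge0; [rewrite subr_ge0|apply: mulr_ge0; apply: ltW].
have H1 : \sum_(z : V) cin x z * f z <= Sin x * diam A B w.
  rewrite -sum_cin mulr_suml; apply: ler_sum => z _; apply: ler_wpM2l.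
    exact: cin_ge0.
  exact: f_le_diam.
have H2 := ler_wpM2l Hk H1.
have EE : (1 - alpha) / (n%:R * Sin x) * (Sin x * diam A B w) = (1 - alpha) / n%:R * diam A B w.
  by field; apply/andP; split; rewrite gt_eqF.
by rewrite EE in H2.
Qed.

Lemma mu_out_ge0 (m : nat) y z : 0 <= mu_out A B w alpha m y z.
Proof.
rewrite mu_out_dec; apply: addr_ge0.
  by case: eqP => // _; apply: divr_ge0 => //; exact: ler0n.
apply: mulr_ge0; last exact: cout_ge0.
apply: divr_ge0; [rewrite subr_ge0 //|apply: mulr_ge0; [exact: ler0n|exact/ltW/Sout_pos]].
Qed.

Lemma mu_in_ge0 (n : nat) y z : 0 <= mu_in A B w alpha n y z.
Proof.
rewrite mu_in_dec; apply: addr_ge0.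
  by case: eqP => // _; apply: divr_ge0 => //; exact: ler0n.
apply: mulr_ge0; last exact: cin_ge0.
apply: divr_ge0; [rewrite subr_ge0 //|apply: mulr_ge0; [exact: ler0n|exact/ltW/Sin_pos]].
Qed.

Lemma sum_mu_out (m : nat) y : (0 < m)%N -> \sum_(z : V) mu_out A B w alpha m y z = m%:R^-1.
Proof.
move=> m0; rewrite (eq_bigr _ (fun z _ => mu_out_dec alpha m y z)) big_split /=.
rewrite -big_mkcond /= big_pred1_eq -mulr_sumr sum_cout.
have S0 := Sout_pos y; have m0' : (0 < m%:R :> R) by rewrite ltr0n.
by field; apply/andP; split; rewrite gt_eqF.
Qed.

Lemma sum_mu_in (n : nat) y : (0 < n)%N -> \sum_(z : V) mu_in A B w alpha n y z = n%:R^-1.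
Proof.
move=> m0; rewrite (eq_bigr _ (fun z _ => mu_in_dec alpha n y z)) big_split /=.
rewrite -big_mkcond /= big_pred1_eq -mulr_sumr sum_cin.
have S0 := Sin_pos y; have m0' : (0 < n%:R :> R) by rewrite ltr0n.
by field; apply/andP; split; rewrite gt_eqF.
Qed.


Lemma cardB0 : (0 < #|B h|)%N.
Proof. have [b Hb] := Bne h; rewrite card_gt0; apply/set0Pn; by exists b. Qed.
Lemma cardA0 : (0 < #|A h|)%N.
Proof. have [b Hb] := Ane h; rewrite card_gt0; apply/set0Pn; by exists b. Qed.

Lemma muB_ge0 z : 0 <= mu_B A B w alpha h z.
Proof. by apply: sumr_ge0 => y _; apply: mu_out_ge0. Qed.
Lemma muA_ge0 z : 0 <= mu_A A B w alpha h z.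
Proof. by apply: sumr_ge0 => y _; apply: mu_in_ge0. Qed.

Lemma sum_muB : \sum_(z : V) mu_B A B w alpha h z = 1.
Proof.
rewrite /mu_B exchange_big /=.
rewrite (eq_bigr (fun _ => #|B h|%:R^-1)); last by move=> y _; apply: sum_mu_out cardB0.
rewrite sumr_const -[_ *+ #|B h|]mulr_natr mulVf // pnatr_eq0 -lt0n; exact: cardB0.
Qed.

Lemma sum_muA : \sum_(z : V) mu_A A B w alpha h z = 1.
Proof.
rewrite /mu_A exchange_big /=.
rewrite (eq_bigr (fun _ => #|A h|%:R^-1)); last by move=> y _; apply: sum_mu_in cardA0.
rewrite sumr_const -[_ *+ #|A h|]mulr_natr mulVf // pnatr_eq0 -lt0n; exact: cardA0.
Qed.

Lemma expB : Lh A B w h - (1 - alpha) * (#|B h|%:R^-1 * \sum_(y in B h) Cw A B w h y)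
   <= \sum_(z : V) mu_B A B w alpha h z * f z.
Proof.
rewrite /mu_B (eq_bigr _ (fun z _ => mulr_suml _ _ _ _)) /= exchange_big /=.
apply: lerT _ (ler_sum _ (fun y Hy => lower_out _ _ cardB0 Hy)).
rewrite sumrB sumr_const -mulr_sumr -[(_ * Lh _ _ _ _) *+ _]mulr_natr.
have m0 : (#|B h|%:R : R) != 0 by rewrite pnatr_eq0 -lt0n; exact: cardB0.
have E1 : #|B h|%:R^-1 * Lh A B w h * #|B h|%:R = Lh A B w h by field.
have E2 : (1 - alpha) / #|B h|%:R * \sum_(y in B h) Cw A B w h y =
   (1 - alpha) * (#|B h|%:R^-1 * \sum_(y in B h) Cw A B w h y) by ring.
rewrite E1 E2; exact: lexx.
Qed.

Lemma expA : \sum_(z : V) mu_A A B w alpha h z * f z <= (1 - alpha) * diam A B w.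
Proof.
rewrite /mu_A (eq_bigr _ (fun z _ => mulr_suml _ _ _ _)) /= exchange_big /=.
apply: lerT (ler_sum _ (fun x Hx => upper_in _ _ cardA0 Hx)) _.
rewrite sumr_const -[(_ * diam _ _ _) *+ _]mulr_natr.
have m0 : (#|A h|%:R : R) != 0 by rewrite pnatr_eq0 -lt0n; exact: cardA0.
have E1 : (1 - alpha) / #|A h|%:R * diam A B w * #|A h|%:R = (1 - alpha) * diam A B w by field.
rewrite E1; exact: lexx.
Qed.


Lemma W1_ge : \sum_(z : V) mu_B A B w alpha h z * f z - \sum_(z : V) mu_A A B w alpha h z * f z
  <= W1 A B w (mu_A A B w alpha h) (mu_B A B w alpha h).
Proof.
apply: lb_le_inf.
  exists (\sum_(u : V) \sum_(v : V) (mu_A A B w alpha h u * mu_B A B w alpha h v) * d u v).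
  exists (fun u v => mu_A A B w alpha h u * mu_B A B w alpha h v); split => //.
  - by move=> u v; apply: mulr_ge0; [apply: muA_ge0|apply: muB_ge0].
  - by move=> u; rewrite -mulr_sumr sum_muB mulr1.
  - by move=> v; rewrite -mulr_suml sum_muA mul1r.
move=> c [pi [H0 Hu Hv ->]].
have E1 : \sum_(u : V) \sum_(v : V) pi u v * (f v - f u) =
   \sum_(z : V) mu_B A B w alpha h z * f z - \sum_(z : V) mu_A A B w alpha h z * f z.
  rewrite (eq_bigr (fun u => \sum_(v : V) pi u v * f v - (\sum_(v : V) pi u v) * f u)); last first.
    by move=> u _; rewrite mulr_suml -sumrB; apply: eq_bigr => v _; rewrite mulrBr.
  rewrite sumrB exchange_big /=; congr (_ - _).
    by apply: eq_bigr => v _; rewrite -mulr_suml Hv.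
  by apply: eq_bigr => u _; rewrite Hu.
rewrite -E1; apply: ler_sum => u _; apply: ler_sum => v _; apply: ler_wpM2l => //.
by rewrite lerBlDl f_lip.
Qed.

Lemma wmin : exists e0, forall e, w e0 <= w e.
Proof.
case: (@arg_minP _ _ E h xpredT w isT) => e0 _ He0; exists e0 => e; exact: He0.
Qed.

Lemma d_ge_wmin e0 x y : (forall e, w e0 <= w e) -> x != y -> w e0 <= d x y.
Proof.
move=> He0 xy; rewrite /d /qdist (negbTE xy).
apply: lb_le_inf; first by have [p Hp] := Hsc _ _ xy; exists (\sum_(e <- p) w e); exists p.
move=> r [[|e t] [//= Hp ->]]; rewrite big_cons; apply: lerT (He0 e) _.
by rewrite lerDl sum_path_ge0.
Qed.

Lemma L_pos : 0 < Lh A B w h.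
Proof.
have [e0 He0] := wmin.
apply: lt_le_trans (wpos e0) _.
have [x0 Hx0] := Ane h; have [y0 Hy0] := Bne h.
apply: lb_le_inf; first by exists (d x0 y0); exists x0, y0.
move=> r [x [y [Hx Hy ->]]]; apply: d_ge_wmin => //.
apply/eqP => xy; have := Hloop h; move/setP/(_ x); by rewrite !inE Hx xy Hy.
Qed.

Lemma main_sec : kappa A B w alpha h <=
    (1 - alpha) / Lh A B w h *
      ((#|B h|%:R)^-1 * \sum_(y in B h) Cw A B w h y + diam A B w).
Proof.
have HW := lerT (lerB expB expA) W1_ge.
have L0 := L_pos.
rewrite /kappa.
set W := W1 _ _ _ _ _ in HW *; set L := Lh A B w h in HW L0 *.
set X := _ * \sum_(y in B h) _ in HW *; set D := diam A B w in HW *.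
have Hi : 0 <= L^-1 by rewrite invr_ge0 ltW.
have H2 := ler_wpM2r Hi HW.
have E1 : (L - (1 - alpha) * X - (1 - alpha) * D) * L^-1 = 1 - (1 - alpha) / L * (X + D).
  by field; rewrite gt_eqF.
rewrite E1 in H2; lra.
Qed.

End S.

Theorem mainTheorem6 (R : realType) (V E : finType)
  (A B : E -> {set V}) (w : E -> R)
  (Hwf : hypergraph_wf A B w) (Hloop : loopless A B)
  (Hsc : strongly_connected A B) (HV : (2 <= #|V|)%N)
  (h : E) (alpha : R) (Ha0 : 0 <= alpha) (Ha1 : alpha <= 1) :
  kappa A B w alpha h <=
    (1 - alpha) / Lh A B w h *
      ((#|B h|%:R)^-1 * \sum_(y in B h) Cw A B w h y + diam A B w).
Proof. exact: main_sec. Qed.
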